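(* Let $p\in\mathbb{C}\setminus\{0\}$ and let $k\ge0$, $N\ge0$ be integers. Let $\mathcal{G}_{k,N}$ be the Lie algebra with $\mathbb{C}$-basis $\{J_{i,m}\mid 0\le i\le k,\ 0\le m\le N\}$ and brackets $[J_{i,m},J_{j,n}]=((j+p)(m+1)-(i+p)(n+1))J_{i+j,m+n}$ if $i+j\le k$ and $m+n\le N$, and $[J_{i,m},J_{j,n}]=0$ otherwise. If $V$ is a nontrivial finite-dimensional irreducible $\mathcal{G}_{k,N}$-module, then $\dim V=1$. *)

(* Defs.v *)
From HB Require Import structures.
From mathcomp Require Import all_boot all_order all_algebra.
From mathcomp Require Import complex.
From mathcomp Require Import Rstruct.
Set Implicit Arguments. Unset Strict Implicit. Unset Printing Implicit Defensive.
Import Order.TTheory GRing.Theory Num.Theory.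
Local Open Scope ring_scope.

Notation CC := (complex Rdefinitions.R).

(* Structure constant of G_{k,N}:
   [J_{i,m}, J_{j,n}] = ((j+p)(m+1) - (i+p)(n+1)) J_{i+j,m+n}. *)
Definition gcoef (p : CC) (i m j n : nat) : CC :=
  (j%:R + p) * (m.+1)%:R - (i%:R + p) * (n.+1)%:R.

(* A d-dimensional representation of G_{k,N}: a Lie algebra homomorphism
   G_{k,N} -> gl_d(C), given by the images rho i m of the basis vectors
   J_{i,m} (extended linearly); by bilinearity of both brackets it suffices
   to check the homomorphism property on pairs of basis vectors.
   Matrices act on column vectors of C^d. *)
Definition is_Grep (k N : nat) (p : CC) (d : nat)
    (rho : 'I_k.+1 -> 'I_N.+1 -> 'M[CC]_d) : Prop :=
  forall (i j : 'I_k.+1) (m n : 'I_N.+1),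
    rho i m *m rho j n - rho j n *m rho i m =
    if ((i : nat) + j <= k)%N && ((m : nat) + n <= N)%N
    then gcoef p i m j n *: rho (inord ((i : nat) + j)%N) (inord ((m : nat) + n)%N)
    else 0.

(* A subspace W of C^d (column vectors) is encoded as the row space of a
   matrix U, W = { u^T | u in rowspace U }.  W is invariant iff
   rho x W <= W, i.e. (U *m (rho x)^T <= U)%MS. *)
Definition Grep_stable (k N d : nat) (rho : 'I_k.+1 -> 'I_N.+1 -> 'M[CC]_d)
    (U : 'M[CC]_d) : Prop :=
  forall (i : 'I_k.+1) (m : 'I_N.+1), (U *m (rho i m)^T <= U)%MS.

Definition Grep_irreducible (k N d : nat) (rho : 'I_k.+1 -> 'I_N.+1 -> 'M[CC]_d)
    : Prop :=
  (0 < d)%N /\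
  forall U : 'M[CC]_d, Grep_stable rho U -> \rank U = 0%N \/ \rank U = d.

(* Main.v *)
Require Import Defs.
From HB Require Import structures.
From mathcomp Require Import all_boot all_order all_algebra.
From mathcomp Require Import complex Rstruct.
From mathcomp Require Import ring zify.
Import Order.TTheory GRing.Theory Num.Theory.
Local Open Scope ring_scope.

Definition Rn (k N d : nat) (rho : 'I_k.+1 -> 'I_N.+1 -> 'M[CC]_d) (i m : nat) :=
  rho (inord i) (inord m).
Arguments Rn {k N d} rho i m.

Lemma rep_nat (p : CC) (k N d : nat) (rho : 'I_k.+1 -> 'I_N.+1 -> 'M[CC]_d) :
  is_Grep p rho -> forall i j m n, (i <= k)%N -> (j <= k)%N -> (m <= N)%N -> (n <= N)%N ->
  Rn rho i m *m Rn rho j n - Rn rho j n *m Rn rho i m =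
  if ((i + j <= k)%N && (m + n <= N)%N) then gcoef p i m j n *: Rn rho (i + j) (m + n)
  else 0.
Proof.
move=> hr i j m n hi hj hm hn.
have := hr (inord i) (inord j) (inord m) (inord n).
by rewrite /Rn !inordK.
Qed.

Arguments rep_nat {p k N d rho}.

Lemma trace_contra (d : nat) (X Y Z : 'M[CC]_d) (c : CC) :
  (0 < d)%N -> c != 0 -> X \in unitmx -> X *m Y = Y *m X ->
  Y *m Z - Z *m Y = c *: X -> False.
Proof.
move=> d0 c0 Xu XY H.
set Xi := invmx X.
have YXi : Y *m Xi = Xi *m Y.
  have e1 : Xi *m (X *m Y) *m Xi = Xi *m (Y *m X) *m Xi by rewrite XY.
  by move: e1; rewrite !mulmxA mulVmx // mul1mx -!mulmxA mulmxV // mulmx1.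
have H2 : Xi *m (Y *m Z - Z *m Y) = c *: 1%:M.
  by rewrite H -scalemxAr mulVmx.
have Htr : \tr (Xi *m (Y *m Z - Z *m Y)) = c * d%:R by rewrite H2 mxtraceZ mxtrace1.
have e3 : \tr (Xi *m (Z *m Y)) = \tr (Xi *m (Y *m Z)).
  by rewrite mulmxA mxtrace_mulC mulmxA YXi -mulmxA.
move: Htr; rewrite mulmxBr mxtraceD.
have eN : forall M : 'M[CC]_d, \tr (- M) = - \tr M.
  by move=> M; rewrite -scaleN1r mxtraceZ mulN1r.
rewrite eN e3 subrr => /esym/eqP; rewrite mulf_eq0 (negPf c0) /= pnatr_eq0.
by move=> /eqP d00; move: d0; rewrite d00.
Qed.

Lemma step (p : CC) (k N d : nat) (rho : 'I_k.+1 -> 'I_N.+1 -> 'M[CC]_d) (s : nat) :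
  p != 0 -> is_Grep p rho -> Grep_irreducible rho ->
  (forall i m, (i <= k)%N -> (m <= N)%N -> (s < i + m)%N -> Rn rho i m = 0) ->
  (0 < s)%N ->
  forall j n, (j <= k)%N -> (n <= N)%N -> (j + n)%N = s -> Rn rho j n = 0.
Proof.
move=> hp hr [d0 hirr] hvan s0 j n hj hn hs.
set X := Rn rho j n.
have comm : forall a b, (a <= k)%N -> (b <= N)%N -> (0 < a + b)%N ->
    X *m Rn rho a b = Rn rho a b *m X.
  move=> a b ha hb hab; apply/eqP; rewrite -subr_eq0; apply/eqP.
  rewrite /X (rep_nat hr _ _ _ _ hj ha hn hb).
  case: ifP => [/andP [h1 h2]|] //.
  by rewrite hvan ?scaler0 //; rewrite -hs; lia.
have hA : X *m Rn rho 0 0 - Rn rho 0 0 *m X = gcoef p j n 0 0 *: X.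
  rewrite /X (rep_nat hr _ _ _ _ hj (leq0n k) hn (leq0n N)) !addn0 hj hn /=.
  done.
set U := kermx X^T.
have stab : Grep_stable rho U.
  move=> i m; apply/sub_kermxP.
  have -> : rho i m = Rn rho i m by rewrite /Rn !inord_val.
  have hi : (i <= k)%N by rewrite -ltnS ltn_ord.
  have hm : (m <= N)%N by rewrite -ltnS ltn_ord.
  rewrite -mulmxA -trmx_mul.
  case: (posnP (i + m)) => [/eqP|him].
    rewrite addn_eq0 => /andP [/eqP -> /eqP ->].
    have -> : X *m Rn rho 0 0 = Rn rho 0 0 *m X + gcoef p j n 0 0 *: X.
      by rewrite -hA addrC subrK.
    rewrite linearD /= trmx_mul mulmxDr mulmxA mulmx_ker mul0mx add0r.
    by rewrite linearZ /= -scalemxAr mulmx_ker scaler0.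
  by rewrite comm // trmx_mul mulmxA mulmx_ker mul0mx.
case: (hirr U stab); rewrite mxrank_ker mxrank_tr.
- move=> hU.
  have : \rank X = d by have := rank_leq_row X; lia.
  move=> /eqP hX.
  have Xu : X \in unitmx by rewrite -row_free_unit.
  exfalso.
  have [c0|c0] := eqVneq (gcoef p j n 0 0) 0; last first.
    exact: (@trace_contra d X X (Rn rho 0 0) _ d0 c0 Xu erefl hA).
  have hpn : p * n%:R = j%:R.
    move: c0; rewrite /gcoef => /eqP; rewrite subr_eq0 => /eqP.
    rewrite add0r mulr1 -addn1 natrD mulrDr mulr1 => h.
    by apply: (addIr p); rewrite h addrC.
  have j0 : (0 < j)%N.
    case: (posnP j) => // j0; exfalso.
    move: hpn; rewrite j0 => /eqP; rewrite mulf_eq0 (negPf hp) /= pnatr_eq0 => /eqP n0.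
    by move: hs s0; rewrite j0 n0 => <-.
  have h1 : (1 <= k)%N by lia.
  have h2 : (j - 1 <= k)%N by lia.
  have := rep_nat hr _ _ _ _ h1 h2 (leq0n N) hn.
  rewrite (_ : (1 + (j - 1) <= k)%N && (0 + n <= N)%N = true); last first.
    by apply/andP; split; lia.
  rewrite (_ : (1 + (j - 1))%N = j); last by lia.
  rewrite add0n => H.
  have cne : gcoef p 1 0 (j - 1) n != 0.
    have -> : gcoef p 1 0 (j - 1) n = - (n.+2)%:R.
      rewrite /gcoef natrB // -[n.+2]addn2 -[n.+1]addn1 !natrD -hpn; ring.
    by rewrite oppr_eq0 pnatr_eq0.
  apply: (@trace_contra d X _ _ _ d0 cne Xu _ H).
  by rewrite comm.
- move=> hU; apply/eqP; rewrite -mxrank_eq0; apply/eqP.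
  have := rank_leq_row X; lia.
Qed.

Theorem lemma3p3 (p : CC) (k N d : nat) (rho : 'I_k.+1 -> 'I_N.+1 -> 'M[CC]_d) :
  p != 0 -> is_Grep p rho -> Grep_irreducible rho -> d = 1%N.
Proof.
move=> hp hr hirr.
have van : forall t i m, (i <= k)%N -> (m <= N)%N -> (0 < i + m)%N ->
    (k + N < i + m + t)%N -> Rn rho i m = 0.
  elim=> [|t IH] i m hi hm him hlt; first by exfalso; lia.
  case: (ltnP (k + N) (i + m + t)) => h; first exact: IH.
  apply: (@step p k N d rho (i + m)%N hp hr hirr) => //.
  move=> a b ha hb hab; apply: IH => //; lia.
have van0 : forall i m, (i <= k)%N -> (m <= N)%N -> (0 < i + m)%N -> Rn rho i m = 0.
  move=> i m hi hm him; apply: (van (k + N).+1) => //; lia.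
case: hirr => d0 hirr.
set A := Rn rho 0 0.
have : size (char_poly A^T) != 1%N by rewrite size_char_poly; lia.
move=> /closed_rootP [a]; rewrite -eigenvalue_root_char => /eigenvalueP [v hv v0].
pose i0 : 'I_d := Ordinal d0.
pose U : 'M[CC]_d := delta_mx i0 (0 : 'I_1) *m v.
have Uv : delta_mx (0 : 'I_1) i0 *m U = v.
  rewrite /U mulmxA mul_delta_mx; apply/matrixP => i j.
  by rewrite (ord1 i) !mxE big_ord1 !mxE !eqxx mul1r.
have U0 : \rank U != 0%N.
  rewrite mxrank_eq0; apply/eqP => U0; move: v0; by rewrite -Uv U0 mulmx0 eqxx.
have U1 : (\rank U <= 1)%N.
  by rewrite /U (leq_trans (mxrankM_maxr _ _)) // rank_rV leq_b1.
have stab : Grep_stable rho U.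
  move=> i m.
  have -> : rho i m = Rn rho i m by rewrite /Rn !inord_val.
  have hi : (i <= k)%N by rewrite -ltnS ltn_ord.
  have hm : (m <= N)%N by rewrite -ltnS ltn_ord.
  case: (posnP (i + m)) => [/eqP|him].
    rewrite addn_eq0 => /andP [/eqP -> /eqP ->].
    by rewrite /U -mulmxA hv -scalemxAr scalemx_sub.
  by rewrite van0 // trmx0 mulmx0 sub0mx.
case: (hirr U stab) => hU; first by rewrite hU in U0.
by move: U1 U0; rewrite hU; lia.
Qed.
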